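(* Let $n\ge 2$. The completely isolated subsemigroups of $\overline{\mathcal{PI}^{\ast}}_n$ are exactly $\overline{\mathcal{PI}^{\ast}}_n$, $\mathcal{S}_n$ and $\overline{\mathcal{PI}^{\ast}}_n\setminus\mathcal{S}_n$.
   Context: Let $X=\{1,\dots,n\}$, $X'=\{1',\dots,n'\}$. $\overline{\mathcal{PI}^{\ast}}_n$ is the set of partitions of $X\cup X'$ each of whose blocks is a singleton (point) or a generalised line (a set meeting both $X$ and $X'$), with product $\circ$: $\alpha\circ\beta$ has as generalised lines exactly the sets $A\cup D'$ such that $A\cup B'$ is a generalised line of $\alpha$ and $B\cup D'$ is a generalised line of $\beta$ (for the same $B\subseteq X$), all other elements being points. $\mathcal{S}_n$ is its group of units: elements all of whose blocks are $\{x,\pi(x)'\}$ for a permutation $\pi$ of $X$. A subsemigroup $T$ of a semigroup $S$ is completely isolated if for all $a,b\in S$, $ab\in T$ implies $a\in T$ or $b\in T$. *)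

(* Defs.v *)
From mathcomp Require Import all_boot all_fingroup.
Set Implicit Arguments. Unset Strict Implicit. Unset Printing Implicit Defensive.

(* Points of X ∪ X': inl x = x ∈ X, inr x = x' ∈ X'. *)
Definition pt (n : nat) : finType := ('I_n + 'I_n)%type.

(* A partition of X ∪ X' is represented as its set of blocks. *)
Definition elt (n : nat) := {set {set pt n}}.

Section Defs.
Variable n : nat.

Definition lefts (B : {set pt n}) : {set 'I_n} := [set x | inl x \in B].
Definition rights (B : {set pt n}) : {set 'I_n} := [set x | inr x \in B].

Definition gline (B : {set pt n}) : bool :=
  (lefts B != set0) && (rights B != set0).

Definition PIbar (a : elt n) : bool :=
  partition a [set: pt n] &&
  [forall B in a, (#|B| == 1) || gline B].

Definition PIset : {set elt n} := [set a | PIbar a].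

(* the block A ∪ D' built from A ∪ B' (in alpha) and B ∪ D' (in beta) *)
Definition glue (B1 B2 : {set pt n}) : {set pt n} :=
  [set p | match p with inl x => x \in lefts B1 | inr y => y \in rights B2 end].

Definition prod_lines (a b : elt n) : {set {set pt n}} :=
  [set glue B1 B2 | B1 in a, B2 in b &
     [&& gline B1, gline B2 & rights B1 == lefts B2]].

Definition prod (a b : elt n) : elt n :=
  prod_lines a b :|: [set [set p] | p in ~: cover (prod_lines a b)].

Definition Sset : {set elt n} :=
  [set a | [exists pi : {perm 'I_n},
     a == [set [set inl x; inr (pi x)] | x : 'I_n]]].

Definition subsemigroup (T : {set elt n}) : Prop :=
  [/\ T \subset PIset, T != set0 &
      forall a b, a \in T -> b \in T -> prod a b \in T].

Definition completely_isolated (T : {set elt n}) : Prop :=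
  forall a b, a \in PIset -> b \in PIset -> prod a b \in T -> a \in T \/ b \in T.

End Defs.

(* Main.v *)
Require Import Defs.
From mathcomp Require Import all_boot all_fingroup.
Set Implicit Arguments. Unset Strict Implicit. Unset Printing Implicit Defensive.

Section Basics.
Variable n : nat.
Local Notation ptn := (pt n).
Local Notation eltn := (elt n).

Definition mkline (A D : {set 'I_n}) : {set ptn} :=
  [set p | match p with inl x => x \in A | inr y => y \in D end].
Definition lines (a : eltn) := [set B in a | gline B].
Definition mk (L : {set {set ptn}}) : eltn := L :|: [set [set p] | p in ~: cover L].
Definition Lfam (a : eltn) := [set lefts B | B in lines a].
Definition Rfam (a : eltn) := [set rights B | B in lines a].
Definition lcov (a : eltn) := \bigcup_(B in lines a) lefts B.
Definition rcov (a : eltn) := \bigcup_(B in lines a) rights B.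
Definition mu a := #|lcov a| + #|rcov a|.
Definition Pm (s : {perm 'I_n}) : eltn := [set [set inl x; inr (s x)] | x : 'I_n].
Definition zero : eltn := mk set0.

Lemma in_lefts x (B : {set ptn}) : (x \in lefts B) = (inl x \in B).
Proof. by rewrite inE. Qed.
Lemma in_rights x (B : {set ptn}) : (x \in rights B) = (inr x \in B).
Proof. by rewrite inE. Qed.
Lemma lefts_mkline A D : lefts (mkline A D) = A.
Proof. by apply/setP=> x; rewrite !inE. Qed.
Lemma rights_mkline A D : rights (mkline A D) = D.
Proof. by apply/setP=> x; rewrite !inE. Qed.
Lemma mkline_eta (B : {set ptn}) : mkline (lefts B) (rights B) = B.
Proof. by apply/setP=> [[x|x]]; rewrite !inE. Qed.
Lemma glueE (B1 B2 : {set ptn}) : glue B1 B2 = mkline (lefts B1) (rights B2).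
Proof. by []. Qed.
Lemma gline_mkline A D : gline (mkline A D) = (A != set0) && (D != set0).
Proof. by rewrite /gline lefts_mkline rights_mkline. Qed.
Lemma gline_set1 (p : ptn) : gline [set p] = false.
Proof.
apply/negP; case/andP=> /set0Pn[x]; rewrite inE in_set1 => /eqP e1.
case/set0Pn=> y; rewrite inE in_set1 => /eqP e2; by subst p.
Qed.
Lemma PmE s x : [set inl x; inr (s x)] = mkline [set x] [set s x] :> {set ptn}.
Proof. by apply/setP=> [[y|y]]; rewrite !inE /= ?orbF. Qed.

Lemma in_lines (B : {set ptn}) (a : eltn) : (B \in lines a) = (B \in a) && gline B.
Proof. by rewrite inE. Qed.

Lemma PI_part (a : eltn) : a \in PIset n -> partition a [set: ptn].
Proof. by rewrite inE => /andP[]. Qed.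

Lemma PI_same (a : eltn) B1 B2 p : a \in PIset n -> B1 \in a -> B2 \in a ->
  p \in B1 -> p \in B2 -> B1 = B2.
Proof.
move=> /PI_part /and3P[_ tI _] h1 h2 p1 p2.
case: (eqVneq B1 B2) => // ne.
move/trivIsetP: tI => tI; by have := disjointFr (tI _ _ h1 h2 ne) p1; rewrite p2.
Qed.

Lemma PI_cover (a : eltn) p : a \in PIset n -> exists2 B, B \in a & p \in B.
Proof.
move=> /PI_part /and3P[/eqP cv _ _].
have : p \in cover a by rewrite cv inE.
by case/bigcupP=> B hB pB; exists B.
Qed.

Lemma PI_n0 (a : eltn) : a \in PIset n -> set0 \notin a.
Proof. by move=> /PI_part /and3P[]. Qed.

Lemma PI_block (a : eltn) B : a \in PIset n -> B \in a -> ~~ gline B -> exists p, B = [set p].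
Proof.
rewrite inE => /andP[_ /forall_inP h] hB ng.
by have /orP[/cards1P//|g] := h B hB; rewrite g in ng.
Qed.

Lemma PI_line_same (a : eltn) B1 B2 p : a \in PIset n -> B1 \in lines a -> B2 \in lines a ->
  p \in B1 -> p \in B2 -> B1 = B2.
Proof. by move=> h; rewrite !in_lines => /andP[h1 _] /andP[h2 _]; apply: (PI_same h h1 h2). Qed.


Lemma set1_n0 (p : ptn) : [set p] != set0.
Proof. by apply/set0Pn; exists p; rewrite inE. Qed.

Lemma notin_cover (L : {set {set ptn}}) B p : B \in L -> p \notin cover L -> p \notin B.
Proof. by move=> hB; apply: contra => pB; apply/bigcupP; exists B. Qed.

Lemma mk_PI (L : {set {set ptn}}) : (forall B, B \in L -> gline B) -> trivIset L ->
  mk L \in PIset n.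
Proof.
move=> gL tL; rewrite inE; apply/andP; split.
  apply/and3P; split.
  - apply/eqP/setP=> p; rewrite inE; apply/bigcupP.
    case: (boolP (p \in cover L)) => [/bigcupP[B hB pB]|np].
      by exists B => //; rewrite inE hB.
    by exists [set p]; rewrite ?inE //; apply/orP; right; apply/imsetP; exists p; rewrite ?inE.
  - apply/trivIsetP => B1 B2; rewrite !inE => /orP[h1|/imsetP[p1 hp1 ->]] /orP[h2|/imsetP[p2 hp2 ->]] ne.
    + by move/trivIsetP: tL => tL; apply: tL.
    + rewrite disjoint_sym disjoints1; rewrite inE in hp2; exact: notin_cover h1 hp2.
    + rewrite disjoints1; rewrite inE in hp1; exact: notin_cover h2 hp1.
    + rewrite disjoints1 inE; apply: contra ne => /eqP->; by [].
  - rewrite !inE negb_or; apply/andP; split.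
      by apply/negP=> /gL /andP[/set0Pn[x]]; rewrite !inE.
    apply/imsetP=> [[p _ e]]; by have := set1_n0 p; rewrite -e eqxx.
apply/forall_inP=> B; rewrite !inE => /orP[/gL->|/imsetP[p _ ->]]; first by rewrite orbT.
by rewrite cards1.
Qed.

Lemma lines_mk (L : {set {set ptn}}) : (forall B, B \in L -> gline B) -> lines (mk L) = L.
Proof.
move=> gL; apply/setP=> B; rewrite !inE.
case: (boolP (B \in L)) => hB /=; first by rewrite gL.
by apply/negP=> /andP[/imsetP[p _ ->]]; rewrite gline_set1.
Qed.

Lemma mk_lines (a : eltn) : a \in PIset n -> mk (lines a) = a.
Proof.
move=> ha; apply/setP=> B; rewrite !inE.
apply/idP/idP.
  case/orP=> [/andP[]//|/imsetP[p hp ->]].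
  have [B' hB' pB'] := PI_cover p ha.
  case: (boolP (gline B')) => g.
    by rewrite inE in hp; case/negP: hp; apply/bigcupP; exists B' => //; rewrite inE hB' g.
  have [q eq] := PI_block ha hB' g; move: pB'; rewrite eq inE => /eqP ->.
  by rewrite -eq.
move=> hB; rewrite hB /=; case: (boolP (gline B)) => //= g.
have [p eB0] := PI_block ha hB g; subst B.
apply/imsetP; exists p => //; rewrite inE; apply/negP=> /bigcupP[B' hB' pB'].
rewrite inE in hB'; case/andP: hB' => hB' g'.
have eB := PI_same ha hB hB' (set11 p) pB'.
by rewrite -eB in g'; rewrite g' in g.
Qed.

End Basics.

Section Prod.
Variable n : nat.
Local Notation ptn := (pt n).
Local Notation eltn := (elt n).

Lemma prod_linesP (a b : eltn) B :
  reflect (exists B1, exists B2, [/\ B1 \in lines a, B2 \in lines b,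
             rights B1 = lefts B2 & B = glue B1 B2])
          (B \in prod_lines a b).
Proof.
apply: (iffP idP).
  case/imset2P=> B1 B2 h1; rewrite inE => /andP[h2 /and3P[g1 g2 /eqP e]] ->.
  by exists B1, B2; split=> //; rewrite in_lines ?h1 ?h2 ?g1 ?g2.
case=> B1 [B2 [h1 h2 e ->]]; rewrite in_lines in h1; rewrite in_lines in h2.
case/andP: h1 => h1 g1; case/andP: h2 => h2 g2.
by apply/imset2P; exists B1 B2 => //; rewrite inE h2 g1 g2 e eqxx.
Qed.

Lemma lines_gline (a : eltn) B : B \in lines a -> gline B.
Proof. by rewrite in_lines => /andP[]. Qed.

Lemma prod_lines_gline (a b : eltn) B : B \in prod_lines a b -> gline B.
Proof.
case/prod_linesP=> B1 [B2 [h1 h2 _ ->]].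
by rewrite glueE gline_mkline; case/andP: (lines_gline h1) => -> _; case/andP: (lines_gline h2).
Qed.

Lemma line_nl (a : eltn) B : B \in lines a -> exists x, inl x \in B.
Proof. by move/lines_gline=> /andP[/set0Pn[x]]; rewrite inE; exists x. Qed.
Lemma line_nr (a : eltn) B : B \in lines a -> exists x, inr x \in B.
Proof. by move/lines_gline=> /andP[_ /set0Pn[x]]; rewrite inE; exists x. Qed.

Lemma prod_lines_triv (a b : eltn) : a \in PIset n -> b \in PIset n ->
  trivIset (prod_lines a b).
Proof.
move=> ha hb; apply/trivIsetP => B B' /prod_linesP[B1 [B2 [h1 h2 e ->]]]
  /prod_linesP[B1' [B2' [h1' h2' e' ->]]] ne.
rewrite disjoints_subset; apply/subsetP => -[x|x] p1; rewrite inE; apply/negP => p2;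
  rewrite !inE in p1 p2; case/negP: ne.
  have E1 := PI_line_same ha h1 h1' p1 p2; subst B1'.
  have [y hy] := line_nl h2.
  have hy' : inl y \in B2' by rewrite -in_lefts -e' e in_lefts.
  by have E2 := PI_line_same hb h2 h2' hy hy'; subst B2'.
have E2 := PI_line_same hb h2 h2' p1 p2; subst B2'.
have [y hy] := line_nr h1.
have hy' : inr y \in B1' by rewrite -in_rights e' -e in_rights.
by have E1 := PI_line_same ha h1 h1' hy hy'; subst B1'.
Qed.

Lemma prodE (a b : eltn) : prod a b = mk (prod_lines a b).
Proof. by []. Qed.

Lemma prod_PI (a b : eltn) : a \in PIset n -> b \in PIset n -> prod a b \in PIset n.
Proof.
by move=> ha hb; rewrite prodE; apply: mk_PI; [exact: prod_lines_gline | exact: prod_lines_triv].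
Qed.

Lemma lines_prod (a b : eltn) : lines (prod a b) = prod_lines a b.
Proof. by rewrite prodE lines_mk //; exact: prod_lines_gline. Qed.

Lemma lcovP (a : eltn) x : reflect (exists2 B, B \in lines a & inl x \in B) (x \in lcov a).
Proof.
rewrite /lcov; apply: (iffP bigcupP) => -[B h1 h2]; exists B => //; by rewrite ?in_lefts in h2 *.
Qed.
Lemma rcovP (a : eltn) x : reflect (exists2 B, B \in lines a & inr x \in B) (x \in rcov a).
Proof.
rewrite /rcov; apply: (iffP bigcupP) => -[B h1 h2]; exists B => //; by rewrite ?in_rights in h2 *.
Qed.

Lemma lcov_prod_sub (a b : eltn) : lcov (prod a b) \subset lcov a.
Proof.
apply/subsetP=> x /lcovP[B]; rewrite lines_prod => /prod_linesP[B1 [B2 [h1 h2 e ->]]].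
by rewrite !inE => hx; apply/lcovP; exists B1.
Qed.

Lemma rcov_prod_sub (a b : eltn) : rcov (prod a b) \subset rcov b.
Proof.
apply/subsetP=> x /rcovP[B]; rewrite lines_prod => /prod_linesP[B1 [B2 [h1 h2 e ->]]].
by rewrite !inE => hx; apply/rcovP; exists B2.
Qed.

Lemma lcov_prod_lt (a b : eltn) B0 : a \in PIset n -> B0 \in lines a ->
  rights B0 \notin Lfam b -> #|lcov (prod a b)| < #|lcov a|.
Proof.
move=> ha h0 nL; apply: proper_card; apply/properP; split; first exact: lcov_prod_sub.
have [x hx] := line_nl h0; exists x; first by apply/lcovP; exists B0.
apply/negP=> /lcovP[B]; rewrite lines_prod => /prod_linesP[B1 [B2 [h1 h2 e ->]]].
rewrite !inE => hx1; have E := PI_line_same ha h0 h1 hx hx1; subst B1.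
by case/negP: nL; rewrite e; apply/imsetP; exists B2.
Qed.

Lemma rcov_prod_lt (a b : eltn) B0 : b \in PIset n -> B0 \in lines b ->
  lefts B0 \notin Rfam a -> #|rcov (prod a b)| < #|rcov b|.
Proof.
move=> hb h0 nR; apply: proper_card; apply/properP; split; first exact: rcov_prod_sub.
have [x hx] := line_nr h0; exists x; first by apply/rcovP; exists B0.
apply/negP=> /rcovP[B]; rewrite lines_prod => /prod_linesP[B1 [B2 [h1 h2 e ->]]].
rewrite !inE => hx1; have E := PI_line_same hb h0 h2 hx hx1; subst B2.
by case/negP: nR; rewrite -e; apply/imsetP; exists B1.
Qed.

Lemma lines_gline_in (a : eltn) B : B \in lines a -> B \in a.
Proof. by rewrite in_lines => /andP[]. Qed.

End Prod.

Section Units.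
Variable n : nat.
Local Notation ptn := (pt n).
Local Notation eltn := (elt n).

Lemma PmE2 (s : {perm 'I_n}) : Pm s = [set mkline [set x] [set s x] | x : 'I_n].
Proof. by apply: eq_imset => x; rewrite PmE. Qed.

Lemma SsetP (a : eltn) : reflect (exists s, a = Pm s) (a \in Sset n).
Proof.
rewrite inE; apply: (iffP existsP) => -[s hs]; exists s; first exact/eqP.
by rewrite hs; apply/eqP.
Qed.

Lemma K_unit (a : eltn) : a \in PIset n ->
  (forall x, exists B, B \in lines a /\ lefts B = [set x]) -> a \in Sset n.
Proof.
move=> ha H; have [f hf] := fin_all_exists H.
have H2 : forall x, exists y, inr y \in f x by move=> x; case: (hf x) => h _; exact: line_nr h.
have [g hg] := fin_all_exists H2.
have ginj : injective g.
  move=> x1 x2 e; have := hg x1; rewrite e => h1.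
  have E := PI_line_same ha (proj1 (hf x1)) (proj1 (hf x2)) h1 (hg x2).
  by apply: set1_inj; rewrite -(proj2 (hf x1)) -(proj2 (hf x2)) E.
pose s := perm ginj.
have fx : forall x, f x = mkline [set x] [set s x].
  move=> x; rewrite -(mkline_eta (f x)) (proj2 (hf x)); congr mkline.
  apply/setP=> y; rewrite !inE permE; apply/idP/idP; last by move/eqP->; exact: hg.
  move=> hy; have hz := hg ((s^-1)%g y).
  have e : g ((s^-1)%g y) = y by rewrite -{2}(permKV s y) /s permE.
  rewrite e in hz.
  have E := PI_line_same ha (proj1 (hf x)) (proj1 (hf ((s^-1)%g y))) hy hz.
  have : [set x] = [set (s^-1)%g y] by rewrite -(proj2 (hf x)) -(proj2 (hf ((s^-1)%g y))) E.
  by move/set1_inj => ->; rewrite e.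
have fa : forall x, f x \in a by move=> x; case: (hf x) => /lines_gline_in h _; exact h.
apply/SsetP; exists s; rewrite PmE2; apply/setP=> B; apply/idP/idP.
  move=> hB; have : B != set0 by apply: contraNneq (PI_n0 ha) => <-.
  case/set0Pn=> -[x|y] hp.
    have hx : inl x \in f x by rewrite -in_lefts (proj2 (hf x)) inE.
    by rewrite (PI_same ha hB (fa x) hp hx); apply/imsetP; exists x => //; rewrite fx.
  have hy : inr y \in f ((s^-1)%g y) by rewrite fx !inE permKV.
  by rewrite (PI_same ha hB (fa _) hp hy); apply/imsetP; exists ((s^-1)%g y) => //; rewrite fx.
by case/imsetP=> x _ ->; rewrite -fx.
Qed.


Lemma mk_full (L : {set {set ptn}}) : cover L = setT -> mk L = L.
Proof.
move=> cv; rewrite /mk cv; apply/setP=> B; rewrite !inE.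
case: (B \in L) => //=; apply/negP => /imsetP[p]; by rewrite !inE.
Qed.

Lemma Pm_gline (s : {perm 'I_n}) B : B \in Pm s -> gline B.
Proof.
rewrite PmE2 => /imsetP[x _ ->]; rewrite gline_mkline.
by apply/andP; split; apply/set0Pn; eexists; rewrite inE.
Qed.

Lemma Pm_triv (s : {perm 'I_n}) : trivIset (Pm s).
Proof.
apply/trivIsetP=> B1 B2; rewrite PmE2 => /imsetP[x1 _ ->] /imsetP[x2 _ ->] ne.
rewrite disjoints_subset; apply/subsetP => -[y|y]; rewrite !inE => /eqP ->;
  apply: contra ne => /eqP e; first by rewrite e.
by rewrite (perm_inj e).
Qed.

Lemma Pm_cover (s : {perm 'I_n}) : cover (Pm s) = setT.
Proof.
apply/setP=> -[x|y]; rewrite inE; apply/bigcupP; rewrite PmE2.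
  by exists (mkline [set x] [set s x]); [apply/imsetP; exists x | rewrite !inE].
exists (mkline [set (s^-1)%g y] [set s ((s^-1)%g y)]); first by apply/imsetP; exists ((s^-1)%g y).
by rewrite !inE permKV.
Qed.

Lemma Pm_mk (s : {perm 'I_n}) : mk (Pm s) = Pm s.
Proof. exact: mk_full (Pm_cover s). Qed.

Lemma Pm_PI (s : {perm 'I_n}) : Pm s \in PIset n.
Proof. by rewrite -Pm_mk; apply: mk_PI; [exact: Pm_gline | exact: Pm_triv]. Qed.

Lemma lines_Pm (s : {perm 'I_n}) : lines (Pm s) = Pm s.
Proof. by rewrite -{1}Pm_mk lines_mk //; exact: Pm_gline. Qed.

Lemma Pm_S (s : {perm 'I_n}) : Pm s \in Sset n.
Proof. by apply/SsetP; exists s. Qed.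

Lemma S_PI (a : eltn) : a \in Sset n -> a \in PIset n.
Proof. by case/SsetP=> s ->; exact: Pm_PI. Qed.

Lemma prod_Pm (s t : {perm 'I_n}) : prod (Pm s) (Pm t) = Pm (s * t)%g.
Proof.
suff E : prod_lines (Pm s) (Pm t) = Pm (s * t)%g by rewrite prodE E Pm_mk.
apply/setP=> B; apply/prod_linesP/idP.
  case=> B1 [B2 []]; rewrite !lines_Pm !PmE2 => /imsetP[x _ ->] /imsetP[y _ ->].
  rewrite rights_mkline lefts_mkline => /set1_inj e ->.
  apply/imsetP; exists x => //; rewrite glueE lefts_mkline rights_mkline permM e //.
rewrite PmE2 => /imsetP[x _ ->].
exists (mkline [set x] [set s x]), (mkline [set s x] [set t (s x)]).
rewrite !lines_Pm !PmE2 glueE !lefts_mkline !rights_mkline permM; split=> //.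
  by apply/imsetP; exists x.
by apply/imsetP; exists (s x).
Qed.

Lemma prodS_left (a b : eltn) : a \in PIset n -> b \in PIset n ->
  prod a b \in Sset n -> a \in Sset n.
Proof.
move=> ha hb /SsetP[s e]; apply: K_unit => // x.
have : mkline [set x] [set s x] \in lines (prod a b).
  by rewrite e lines_Pm PmE2; apply/imsetP; exists x.
rewrite lines_prod => /prod_linesP[B1 [B2 [h1 h2 _ E]]].
by exists B1; split=> //; rewrite -(lefts_mkline [set x] [set s x]) E glueE lefts_mkline.
Qed.

Lemma lcov_Pm (s : {perm 'I_n}) : lcov (Pm s) = setT.
Proof.
apply/setP=> x; rewrite inE; apply/lcovP; exists (mkline [set x] [set s x]); last by rewrite !inE.
by rewrite lines_Pm PmE2; apply/imsetP; exists x.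
Qed.

Lemma rcov_Pm (s : {perm 'I_n}) : rcov (Pm s) = setT.
Proof.
apply/setP=> y; rewrite inE; apply/rcovP.
exists (mkline [set (s^-1)%g y] [set s ((s^-1)%g y)]); last by rewrite !inE permKV.
by rewrite lines_Pm PmE2; apply/imsetP; exists ((s^-1)%g y).
Qed.

Lemma mu_S (a : eltn) : a \in Sset n -> mu a = n + n.
Proof. by case/SsetP=> s ->; rewrite /mu lcov_Pm rcov_Pm cardsT card_ord. Qed.

Lemma mu_le (a : eltn) : mu a <= n + n.
Proof.
rewrite /mu; apply: leq_add; rewrite -[X in _ <= X](card_ord n); exact: max_card.
Qed.

Lemma lines_zero : lines (zero n) = set0.
Proof. rewrite /zero lines_mk //; move=> B; by rewrite inE. Qed.

Lemma zero_PI : zero n \in PIset n.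
Proof. apply: mk_PI; first by move=> B; rewrite inE. by apply/trivIsetP=> B1 B2; rewrite inE. Qed.

Lemma zero_notS : 0 < n -> zero n \notin Sset n.
Proof.
move=> n0; apply/negP=> /mu_S; rewrite /mu /lcov /rcov lines_zero !big_set0 cards0 /=.
by case: n n0.
Qed.

Lemma no_lines_zero (a : eltn) : a \in PIset n -> lines a = set0 -> a = zero n.
Proof. by move=> ha e; rewrite -(mk_lines ha) e. Qed.

End Units.

Section Fact.
Variable n : nat.
Local Notation ptn := (pt n).
Local Notation eltn := (elt n).
Variables (a : eltn) (C : {set ptn} -> {set 'I_n}).
Hypothesis ha : a \in PIset n.
Hypothesis hC0 : forall B, B \in lines a -> C B != set0.
Hypothesis hCd : forall B B' y, B \in lines a -> B' \in lines a -> y \in C B -> y \in C B' -> B = B'.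

Definition Lx := [set mkline (lefts B) (C B) | B in lines a].
Definition Ly := [set mkline (C B) (rights B) | B in lines a].
Definition fx := mk Lx.
Definition fy := mk Ly.
Definition UC := \bigcup_(B in lines a) C B.

Lemma Lx_gline B : B \in Lx -> gline B.
Proof.
case/imsetP=> B' h ->; rewrite gline_mkline hC0 // andbT.
by case/andP: (lines_gline h).
Qed.
Lemma Ly_gline B : B \in Ly -> gline B.
Proof.
case/imsetP=> B' h ->; rewrite gline_mkline hC0 //=.
by case/andP: (lines_gline h).
Qed.

Lemma Lx_triv : trivIset Lx.
Proof.
apply/trivIsetP=> B1 B2 /imsetP[D1 h1 ->] /imsetP[D2 h2 ->] ne.
rewrite disjoints_subset; apply/subsetP => -[y|y]; rewrite !inE => p1; apply/negP => p2;
  case/negP: ne.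
  by rewrite (PI_line_same ha h1 h2 p1 p2).
by rewrite (hCd h1 h2 p1 p2).
Qed.
Lemma Ly_triv : trivIset Ly.
Proof.
apply/trivIsetP=> B1 B2 /imsetP[D1 h1 ->] /imsetP[D2 h2 ->] ne.
rewrite disjoints_subset; apply/subsetP => -[y|y]; rewrite !inE => p1; apply/negP => p2;
  case/negP: ne.
  by rewrite (hCd h1 h2 p1 p2).
by rewrite (PI_line_same ha h1 h2 p1 p2).
Qed.

Lemma fx_PI : fx \in PIset n.
Proof. exact: mk_PI Lx_gline Lx_triv. Qed.
Lemma fy_PI : fy \in PIset n.
Proof. exact: mk_PI Ly_gline Ly_triv. Qed.
Lemma lines_fx : lines fx = Lx.
Proof. exact: lines_mk Lx_gline. Qed.
Lemma lines_fy : lines fy = Ly.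
Proof. exact: lines_mk Ly_gline. Qed.

Lemma fxfy : prod fx fy = a.
Proof.
rewrite prodE; apply: etrans (mk_lines ha); congr mk.
apply/setP=> B; apply/prod_linesP/idP.
  case=> B1 [B2 []]; rewrite lines_fx lines_fy => /imsetP[D1 h1 ->] /imsetP[D2 h2 ->].
  rewrite rights_mkline lefts_mkline => e ->.
  have [y hy] : exists y, y \in C D1 by apply/set0Pn; exact: hC0.
  have hy2 : y \in C D2 by rewrite -e.
  by rewrite -(hCd h1 h2 hy hy2) glueE lefts_mkline rights_mkline mkline_eta.
move=> h; exists (mkline (lefts B) (C B)), (mkline (C B) (rights B)).
rewrite lines_fx lines_fy glueE !lefts_mkline !rights_mkline mkline_eta; split=> //.
  by apply/imsetP; exists B.
by apply/imsetP; exists B.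
Qed.

Lemma Lfam_fx : Lfam fx = Lfam a.
Proof. by rewrite /Lfam lines_fx /Lx -imset_comp; apply: eq_imset => B /=; rewrite lefts_mkline. Qed.
Lemma Rfam_fy : Rfam fy = Rfam a.
Proof. by rewrite /Rfam lines_fy /Ly -imset_comp; apply: eq_imset => B /=; rewrite rights_mkline. Qed.

Lemma lcov_fx : lcov fx = lcov a.
Proof.
apply/setP=> x; apply/lcovP/lcovP => -[B]; rewrite ?lines_fx.
  by case/imsetP=> D h -> hx; exists D => //; rewrite !inE in hx.
by move=> h hx; exists (mkline (lefts B) (C B)); [apply/imsetP; exists B | rewrite !inE].
Qed.
Lemma rcov_fy : rcov fy = rcov a.
Proof.
apply/setP=> x; apply/rcovP/rcovP => -[B]; rewrite ?lines_fy.
  by case/imsetP=> D h -> hx; exists D => //; rewrite !inE in hx.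
by move=> h hx; exists (mkline (C B) (rights B)); [apply/imsetP; exists B | rewrite !inE].
Qed.
Lemma rcov_fx : rcov fx = UC.
Proof.
apply/setP=> x; apply/rcovP/bigcupP => -[B]; rewrite ?lines_fx.
  by case/imsetP=> D h -> hx; exists D => //; rewrite !inE in hx.
by move=> h hx; exists (mkline (lefts B) (C B)); [apply/imsetP; exists B | rewrite !inE].
Qed.
Lemma lcov_fy : lcov fy = UC.
Proof.
apply/setP=> x; apply/lcovP/bigcupP => -[B]; rewrite ?lines_fy.
  by case/imsetP=> D h -> hx; exists D => //; rewrite !inE in hx.
by move=> h hx; exists (mkline (C B) (rights B)); [apply/imsetP; exists B | rewrite !inE].
Qed.

Variable B0 : {set ptn}.
Hypothesis hB0 : B0 \in lines a.

Lemma mu_fxx : C B0 \notin Lfam a -> #|UC| <= #|rcov a| -> mu (prod fx fx) < mu a.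
Proof.
move=> nL hU; rewrite /mu; rewrite -addSn; apply: leq_add.
  rewrite -lcov_fx; apply: (lcov_prod_lt (B0 := mkline (lefts B0) (C B0))) fx_PI _ _.
    by rewrite lines_fx; apply/imsetP; exists B0.
  by rewrite rights_mkline Lfam_fx.
apply: leq_trans (subset_leq_card (rcov_prod_sub _ _)) _; by rewrite rcov_fx.
Qed.

Lemma mu_fyy : C B0 \notin Rfam a -> #|UC| <= #|lcov a| -> mu (prod fy fy) < mu a.
Proof.
move=> nR hU; rewrite /mu; rewrite -addnS; apply: leq_add.
  apply: leq_trans (subset_leq_card (lcov_prod_sub _ _)) _; by rewrite lcov_fy.
rewrite -rcov_fy; apply: (rcov_prod_lt (B0 := mkline (C B0) (rights B0))) fy_PI _ _.
  by rewrite lines_fy; apply/imsetP; exists B0.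
by rewrite lefts_mkline Rfam_fy.
Qed.

End Fact.

Section Red.
Variable n : nat.
Local Notation ptn := (pt n).
Local Notation eltn := (elt n).

Definition red_concl (a : eltn) :=
  (mu (prod a a) < mu a) \/
  (exists x y, [/\ x \in PIset n, y \in PIset n, prod x y = a,
                 mu (prod x x) < mu a & mu (prod y y) < mu a]).

Lemma reduce (a : eltn) B0 : a \in PIset n -> a \notin Sset n -> B0 \in lines a ->
  red_concl a.
Proof.
move=> ha nS hB0.
case: (boolP [exists B in lines a, rights B \notin Lfam a]).
  case/exists_inP=> B hB nL; left; rewrite /mu -addSn; apply: leq_add.
    exact: lcov_prod_lt hB nL.
  exact: subset_leq_card (rcov_prod_sub _ _).
rewrite negb_exists_in => /forall_inP H1.
have {}H1 : forall B, B \in lines a -> rights B \in Lfam a by move=> B /H1; rewrite negbK.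
case: (boolP [exists B in lines a, lefts B \notin Rfam a]).
  case/exists_inP=> B hB nR; left; rewrite /mu -addnS; apply: leq_add.
    exact: subset_leq_card (lcov_prod_sub _ _).
  exact: rcov_prod_lt hB nR.
rewrite negb_exists_in => /forall_inP H2.
have {}H2 : forall B, B \in lines a -> lefts B \in Rfam a by move=> B /H2; rewrite negbK.
have rl : rcov a \subset lcov a.
  apply/subsetP=> y /rcovP[B hB hy]; have /imsetP[B' hB' e] := H1 B hB.
  by apply/lcovP; exists B'; rewrite // -in_lefts -e in_rights.
have lr : lcov a \subset rcov a.
  apply/subsetP=> y /lcovP[B hB hy]; have /imsetP[B' hB' e] := H2 B hB.
  by apply/rcovP; exists B'; rewrite // -in_rights -e in_lefts.
right.
case: (boolP [exists B in lines a, exists r1, exists r2,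
                [&& inr r1 \in B, inr r2 \in B & r1 != r2]]).
  case/exists_inP=> B1 hB1 /existsP[r1 /existsP[r2 /and3P[hr1 hr2 ne]]].
  pose c (B : {set ptn}) := odflt r1 [pick y in rights B].
  have hc : forall B, B \in lines a -> inr (c B) \in B.
    move=> B hB; rewrite /c; case: pickP => [y|none] /=; first by rewrite inE.
    by have [y hy] := line_nr hB; have := none y; rewrite inE hy.
  pose C (B : {set ptn}) := [set c B].
  have hC0 : forall B, B \in lines a -> C B != set0 by move=> B _; apply/set0Pn; exists (c B); rewrite inE.
  have hCd : forall B B' y, B \in lines a -> B' \in lines a -> y \in C B -> y \in C B' -> B = B'.
    move=> B B' y hB hB'; rewrite !inE => /eqP-> /eqP e.
    by apply: (PI_line_same ha hB hB' (hc B hB)); rewrite e; exact: hc.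
  have key : rights B1 = [set c B1] -> False.
    move=> e; move: hr1 hr2; rewrite -!in_rights e !inE => /eqP e1 /eqP e2.
    by rewrite e1 e2 eqxx in ne.
  have nR : C B1 \notin Rfam a.
    apply/negP=> /imsetP[B hB e]; apply: key.
    have h1 : inr (c B1) \in B by rewrite -in_rights -e /C inE.
    have E := PI_line_same ha hB1 hB (hc B1 hB1) h1; subst B; by rewrite -e.
  have nL : C B1 \notin Lfam a.
    apply/negP=> /imsetP[B hB e]; apply: key.
    have /imsetP[B2 hB2 e2] := H1 B1 hB1.
    have h1 : inl (c B1) \in B by rewrite -in_lefts -e /C inE.
    have h2 : inl (c B1) \in B2 by rewrite -in_lefts -e2 in_rights hc.
    have E := PI_line_same ha hB hB2 h1 h2; subst B2; by rewrite e2 -e.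
  have UCr : UC a C \subset rcov a.
    apply/subsetP=> y /bigcupP[B hB]; rewrite inE => /eqP->; apply/rcovP; exists B => //; exact: hc.
  exists (fx a C), (fy a C); split.
  - exact: fx_PI.
  - exact: fy_PI.
  - exact: fxfy.
  - apply: mu_fxx hB1 nL _ => //; exact: subset_leq_card.
  - apply: mu_fyy hB1 nR _ => //; apply: subset_leq_card; exact: subset_trans UCr rl.
rewrite negb_exists_in => /forall_inP H3.
have single : forall B r1 r2, B \in lines a -> inr r1 \in B -> inr r2 \in B -> r1 = r2.
  move=> B r1 r2 hB h1 h2; apply/eqP; move: (H3 B hB).
  rewrite negb_exists => /forallP/(_ r1); rewrite negb_exists => /forallP/(_ r2).
  by rewrite h1 h2 /= negbK.
have [z hz] : exists z, z \notin lcov a.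
  case: (boolP [exists z, z \notin lcov a]) => [/existsP//|].
  rewrite negb_exists => /forallP Hall; exfalso; move/negP: nS; apply.
  apply: K_unit ha _ => x.
  have := Hall x; rewrite negbK => /lcovP[B hB hx]; exists B; split => //.
  have /imsetP[B' hB' e] := H2 B hB.
  apply/setP=> u; rewrite inE; apply/idP/idP; last by move/eqP->; rewrite in_lefts.
  rewrite e !in_rights => hu; apply/eqP; apply: (single B' u x hB' hu).
  by rewrite -in_rights -e in_lefts.
have [d0 hd0] := line_nl hB0.
pose t := tperm d0 z.
pose C (B : {set ptn}) := [set t u | u in lefts B].
have hC0 : forall B, B \in lines a -> C B != set0.
  move=> B hB; have [u hu] := line_nl hB; apply/set0Pn; exists (t u).
  by apply/imsetP; exists u; rewrite ?in_lefts.
have hCd : forall B B' y, B \in lines a -> B' \in lines a -> y \in C B -> y \in C B' -> B = B'.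
  move=> B B' y hB hB' /imsetP[u hu ->] /imsetP[u' hu' /perm_inj e].
  rewrite in_lefts in hu; rewrite in_lefts in hu'; subst u'; exact: PI_line_same ha hB hB' hu hu'.
have zC : z \in C B0 by apply/imsetP; exists d0; rewrite ?in_lefts // /t tpermL.
have nL : C B0 \notin Lfam a.
  apply/negP=> /imsetP[B hB e]; case/negP: hz; apply/lcovP; exists B => //.
  by rewrite -in_lefts -e.
have nR : C B0 \notin Rfam a.
  apply/negP=> /imsetP[B hB e]; case/negP: nL; rewrite e; exact: H1.
have UCl : #|UC a C| <= #|lcov a|.
  rewrite -(card_imset (lcov a) (@perm_inj _ t)); apply: subset_leq_card.
  apply/subsetP=> y /bigcupP[B hB /imsetP[u hu ->]]; apply/imsetP; exists u => //.
  by apply/lcovP; exists B; rewrite -?in_lefts.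
exists (fx a C), (fy a C); split.
- exact: fx_PI.
- exact: fy_PI.
- exact: fxfy.
- apply: mu_fxx hB0 nL _ => //; apply: leq_trans UCl _; exact: subset_leq_card.
- exact: mu_fyy hB0 nR UCl.
Qed.

End Red.

Section Main.
Variable n : nat.
Local Notation ptn := (pt n).
Local Notation eltn := (elt n).

Definition part (W : {set eltn}) :=
  [/\ forall a, a \in W -> a \in PIset n,
      forall a b, a \in W -> b \in W -> prod a b \in W &
      forall a b, a \in PIset n -> b \in PIset n -> prod a b \in W -> a \in W \/ b \in W].

Lemma G (W : {set eltn}) : part W -> forall a, a \in W -> a \notin Sset n -> zero n \in W.
Proof.
case=> WPI Wcl Wsp.
suff H : forall m a, mu a < m -> a \in W -> a \notin Sset n -> zero n \in W.
  by move=> a; exact: H (ltnSn _).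
elim=> // m IH a lt aW nS.
have ha := WPI a aW.
have notS : forall b, mu b < mu a -> b \notin Sset n.
  move=> b lb; apply/negP=> /mu_S e; move: (mu_le a); rewrite -e => /(leq_trans lb).
  by rewrite ltnn.
case: (eqVneq (lines a) set0) => [e|].
  by rewrite -(no_lines_zero ha e).
case/set0Pn=> B0 hB0.
case: (reduce ha nS hB0) => [lt2|[x [y [hx hy e ltx lty]]]].
  apply: (IH (prod a a)); [exact: leq_trans lt2 _ | exact: Wcl | exact: notS].
have : prod x y \in W by rewrite e.
case/(Wsp _ _ hx hy) => h.
  apply: (IH (prod x x)); [exact: leq_trans ltx _ | exact: Wcl | exact: notS].
apply: (IH (prod y y)); [exact: leq_trans lty _ | exact: Wcl | exact: notS].
Qed.

Lemma Pm_pow (W : {set eltn}) (s : {perm 'I_n}) :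
  (forall a b, a \in W -> b \in W -> prod a b \in W) -> Pm s \in W -> Pm 1%g \in W.
Proof.
move=> Wcl hs.
have H : forall k, Pm (s ^+ k.+1)%g \in W.
  elim=> [|k IH]; first by rewrite expg1.
  by rewrite expgSr -prod_Pm; exact: Wcl.
have := H (#[s]%g).-1; rewrite prednK ?order_gt0 //.
by rewrite expg_order.
Qed.

End Main.
Unset Implicit Arguments.

Theorem mainTheorem10 (n : nat) (Hn : 2 <= n) (T : {set elt n}) :
  (subsemigroup T /\ completely_isolated T) <->
  (T = PIset n \/ T = Sset n \/ T = PIset n :\: Sset n).
Proof.
have n0 : 0 < n by apply: leq_trans Hn.
split.
  case=> -[TPI Tn0 Tcl] Tci.
  have TPI' : forall a, a \in T -> a \in PIset n by move=> a; exact: (subsetP TPI).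
  have pT : part T by split.
  pose Q := PIset n :\: T.
  have pQ : part Q.
    split.
    - by move=> a; rewrite in_setD => /andP[].
    - move=> a b; rewrite !in_setD => /andP[na ha] /andP[nb hb]; rewrite prod_PI // andbT.
      by apply/negP=> /(Tci _ _ ha hb) [h|h]; [rewrite h in na | rewrite h in nb].
    - move=> a b ha hb; rewrite !in_setD ha hb !andbT => np.
      case: (boolP (a \in T)) => [aT|]; last by left.
      case: (boolP (b \in T)) => [bT|]; last by right.
      by rewrite Tcl in np.
  have nonunit : forall W W', part W -> part W' -> (forall a, a \in PIset n -> (a \in W) || (a \in W')) ->
      (forall a, a \in W -> a \in W' -> False) -> zero n \in W ->
      forall a, a \in PIset n -> a \notin Sset n -> a \in W.
    move=> W W' pW pW' cov dis zW a ha nS; case/orP: (cov a ha) => // aW'.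
    by case: (dis _ zW (G pW' aW' nS)).
  have covTQ : forall a, a \in PIset n -> (a \in T) || (a \in Q).
    by move=> a ha; rewrite in_setD ha andbT; case: (a \in T).
  have covQT : forall a, a \in PIset n -> (a \in Q) || (a \in T).
    by move=> a ha; rewrite orbC; exact: covTQ.
  have disTQ : forall a, a \in T -> a \in Q -> False by move=> a aT; rewrite in_setD aT.
  have disQT : forall a, a \in Q -> a \in T -> False by move=> a aQ aT; exact: disTQ aT aQ.
  have units : (forall s, Pm s \in T) \/ (forall s, Pm s \notin T).
    case: (boolP (Pm 1%g \in T)) => h1; [left|right] => s.
      case: (boolP (Pm s \in T)) => // hs.
      have hQ : Pm s \in Q by rewrite in_setD hs Pm_PI.
      by have := Pm_pow (s := s) (let: And3 _ c _ := pQ in c) hQ; rewrite in_setD h1.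
    by apply/negP => hs; have := Pm_pow Tcl hs; rewrite (negbTE h1).
  case: (boolP (zero n \in T)) => zT.
    have NT := nonunit T Q pT pQ covTQ disTQ zT.
    case: units => hu.
      left; apply/setP=> a; apply/idP/idP; first exact: TPI'.
      move=> ha; case: (boolP (a \in Sset n)) => [/SsetP[s ->]|nS] //; exact: NT.
    right; right; apply/setP=> a; rewrite in_setD; apply/idP/idP.
      move=> aT; rewrite TPI' // andbT; apply/negP=> /SsetP[s e]; by rewrite e (negbTE (hu s)) in aT.
    by case/andP=> nS ha; exact: NT.
  have zQ : zero n \in Q by rewrite in_setD zT zero_PI.
  have NQ := nonunit Q T pQ pT covQT disQT zQ.
  case: units => hu.
    right; left; apply/setP=> a; apply/idP/idP.
      move=> aT; case: (boolP (a \in Sset n)) => // nS.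
      by have := G pT aT nS; rewrite (negbTE zT).
    by case/SsetP=> s ->.
  exfalso; case/set0Pn: Tn0 => a aT.
  case: (boolP (a \in Sset n)) => [/SsetP[s e]|nS].
    by rewrite e (negbTE (hu s)) in aT.
  by have := G pT aT nS; rewrite (negbTE zT).
case=> [->|[->|->]].
- split.
    split; [exact: subxx | by apply/set0Pn; exists (zero n); exact: zero_PI | exact: prod_PI].
  by move=> a b ha _ _; left.
- split.
    split.
    + by apply/subsetP=> a; exact: S_PI.
    + by apply/set0Pn; exists (Pm 1%g); exact: Pm_S.
    + by move=> a b /SsetP[s ->] /SsetP[t ->]; rewrite prod_Pm Pm_S.
  by move=> a b ha hb h; left; exact: prodS_left ha hb h.
split.
  split.
  + by apply/subsetP=> a; rewrite in_setD => /andP[].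
  + by apply/set0Pn; exists (zero n); rewrite in_setD zero_PI zero_notS.
  + move=> a b; rewrite !in_setD => /andP[na ha] /andP[nb hb]; rewrite prod_PI // andbT.
    by apply/negP=> /(prodS_left ha hb); rewrite (negbTE na).
move=> a b ha hb; rewrite !in_setD ha hb !andbT => nS.
case: (boolP (a \in Sset n)) => [/SsetP[s es]|]; last by left.
case: (boolP (b \in Sset n)) => [/SsetP[t et]|]; last by right.
by rewrite es et prod_Pm Pm_S in nS.
Qed.
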